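(* Let $\rho_n\rightarrow_C\rho_{n-1}\rightarrow_C\cdots\rightarrow_C\rho_1$ ($n\ge1$) be a trace of tidy formulas. Then there is a unique $\rho\in\{\rho_1,\dots,\rho_n\}$ such that $\rho\trianglelefteq_f\rho_i$ for all $i\in\{1,\dots,n\}$ (so that the given trace witnesses $\rho_n\twoheadrightarrow_C^{\rho}\rho_1$). Moreover, if $\rho_1$ is a fixpoint formula then so is $\rho$.
   Context: Syntax. Formulas of the modal $\mu$-calculus are taken in negation normal form: $\phi ::= \top \mid \bot \mid p \mid \neg p \mid x \mid \phi\land\phi\mid\phi\lor\phi\mid\Diamond\phi\mid\Box\phi\mid\mu x.\phi\mid\nu x.\phi$, where $p$ ranges over proposition letters and $x$ over an infinite supply of variables (which occur only positively). The formulas $\top,\bot,p,\neg p,x$ are atomic. $\mathrm{FV}(\phi)$ and $\mathrm{BV}(\phi)$ are the sets of free and bound variables of $\phi$; $\phi$ is tidy if $\mathrm{FV}(\phi)\cap\mathrm{BV}(\phi)=\varnothing$. A fixpoint formula is one of the form $\eta x.\chi$ with $\eta\in\{\mu,\nu\}$. $\chi[\xi/x]$ is the result of replacing every free occurrence of $x$ in $\chi$ by $\xi$; $\xi$ is free for $x$ in $\chi$ if no free variable of $\xi$ becomes bound in $\chi[\xi/x]$. Traces. The trace relation $\rightarrow_C$: $\phi_0\odot\phi_1\rightarrow_C\phi_i$ for $\odot\in\{\land,\lor\}$, $i\in\{0,1\}$; $\heartsuit\phi\rightarrow_C\phi$ for $\heartsuit\in\{\Diamond,\Box\}$; $\eta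 x.\phi\rightarrow_C\phi[\eta x.\phi/x]$; atomic formulas have no successors. A trace is a sequence of formulas with consecutive members related by $\rightarrow_C$. Free subformulas. $\phi\trianglelefteq_f\psi$ iff $\psi=\chi[\phi/y]$ for some formula $\chi$ and variable $y$ with $y\in\mathrm{FV}(\chi)$ and $\phi$ free for $y$ in $\chi$. For a formula $\psi$, $\rho\twoheadrightarrow_C^{\psi}\sigma$ iff there is a trace $\rho=\chi_0\rightarrow_C\cdots\rightarrow_C\chi_m=\sigma$ ($m\ge0$) with $\psi\trianglelefteq_f\chi_i$ for all $i\le m$. *)

(* Defs.v *)
From Stdlib Require Import List Arith PeanoNat.
Import ListNotations.

Inductive fp := Mu | Nu.

Inductive form : Type :=
| FTop | FBot
| FProp (p : nat) | FNProp (p : nat)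
| FVar (x : nat)
| FAnd (a b : form) | FOr (a b : form)
| FDia (a : form) | FBox (a : form)
| FFix (e : fp) (x : nat) (a : form).

Fixpoint fv (f : form) : list nat :=
  match f with
  | FVar x => [x]
  | FAnd a b | FOr a b => fv a ++ fv b
  | FDia a | FBox a => fv a
  | FFix _ x a => filter (fun y => negb (Nat.eqb y x)) (fv a)
  | _ => []
  end.

Fixpoint bv (f : form) : list nat :=
  match f with
  | FAnd a b | FOr a b => bv a ++ bv b
  | FDia a | FBox a => bv a
  | FFix _ x a => x :: bv a
  | _ => []
  end.

Definition tidy (f : form) : Prop :=
  forall x, In x (fv f) -> ~ In x (bv f).

Definition is_fixpoint (f : form) : Prop :=
  exists e x a, f = FFix e x a.

(* subst chi x xi = chi[xi/x]: replace every free occurrence of x in chi by xi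
   (plain, non-capture-avoiding replacement) *)
Fixpoint subst (chi : form) (x : nat) (xi : form) : form :=
  match chi with
  | FVar y => if Nat.eqb y x then xi else FVar y
  | FAnd a b => FAnd (subst a x xi) (subst b x xi)
  | FOr a b => FOr (subst a x xi) (subst b x xi)
  | FDia a => FDia (subst a x xi)
  | FBox a => FBox (subst a x xi)
  | FFix e y a => if Nat.eqb y x then FFix e y a else FFix e y (subst a x xi)
  | f => f
  end.

(* xi is free for x in chi: no free variable of xi becomes bound in chi[xi/x] *)
Fixpoint free_for (xi : form) (x : nat) (chi : form) : Prop :=
  match chi with
  | FAnd a b | FOr a b => free_for xi x a /\ free_for xi x b
  | FDia a | FBox a => free_for xi x a
  | FFix _ y a =>
      if Nat.eqb y x then True
      else (~ In x (fv a) \/ ~ In y (fv xi)) /\ free_for xi x a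
  | _ => True
  end.

Inductive step : form -> form -> Prop :=
| step_and_l a b : step (FAnd a b) a
| step_and_r a b : step (FAnd a b) b
| step_or_l a b : step (FOr a b) a
| step_or_r a b : step (FOr a b) b
| step_dia a : step (FDia a) a
| step_box a : step (FBox a) a
| step_fix e x a : step (FFix e x a) (subst a x (FFix e x a)).

Definition free_sub (phi psi : form) : Prop :=
  exists chi y, In y (fv chi) /\ free_for phi y chi /\ psi = subst chi y phi.

(* Main.v *)
Require Import Defs.
From Stdlib Require Import List Arith PeanoNat Lia.
Import ListNotations.

Inductive fsub (phi : form) : form -> Prop :=
| fs_refl : fsub phi phi
| fs_andl a b : fsub phi a -> fsub phi (FAnd a b)
| fs_andr a b : fsub phi b -> fsub phi (FAnd a b)
| fs_orl a b : fsub phi a -> fsub phi (FOr a b)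
| fs_orr a b : fsub phi b -> fsub phi (FOr a b)
| fs_dia a : fsub phi a -> fsub phi (FDia a)
| fs_box a : fsub phi a -> fsub phi (FBox a)
| fs_fix e x a : fsub phi a -> ~ In x (fv phi) -> fsub phi (FFix e x a).

Fixpoint fsize (f : form) : nat :=
  match f with
  | FAnd a b | FOr a b => S (fsize a + fsize b)
  | FDia a | FBox a => S (fsize a)
  | FFix _ _ a => S (fsize a)
  | _ => 1
  end.

Lemma fsub_size phi psi : fsub phi psi -> phi = psi \/ fsize phi < fsize psi.
Proof. induction 1; simpl; intuition (subst; lia). Qed.

Lemma fsub_antisym a b : fsub a b -> fsub b a -> a = b.
Proof.
  intros H1 H2; apply fsub_size in H1; apply fsub_size in H2; destruct H1 as [|H1]; auto; destruct H2 as [|H2]; auto; lia.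
Qed.

Lemma fsub_fv phi psi : fsub phi psi -> forall y, In y (fv phi) -> In y (fv psi).
Proof.
  induction 1; intros y Hy; simpl; auto using in_or_app.
  apply filter_In; split; auto.
  destruct (Nat.eqb_spec y x); subst; [contradiction|reflexivity].
Qed.

Lemma fsub_trans a b c : fsub a b -> fsub b c -> fsub a c.
Proof.
  intros Hab Hbc; induction Hbc; try (constructor; auto; fail); auto.
  constructor; auto. intro Hx; apply H. eapply fsub_fv; eauto.
Qed.

Lemma subst_notfree b y phi : ~ In y (fv b) -> subst b y phi = b.
Proof.
  induction b; simpl; intros H; auto.
  - destruct (Nat.eqb_spec x y); subst; auto. exfalso; auto.
  - rewrite IHb1, IHb2; auto; intro; apply H; apply in_or_app; auto.
  - rewrite IHb1, IHb2; auto; intro; apply H; apply in_or_app; auto.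
  - rewrite IHb; auto.
  - rewrite IHb; auto.
  - destruct (Nat.eqb_spec x y); auto. rewrite IHb; auto.
    intro Hy; apply H; apply filter_In; split; auto.
    destruct (Nat.eqb_spec y x); [congruence|reflexivity].
Qed.

Lemma free_for_notfree b y phi : ~ In y (fv b) -> free_for phi y b.
Proof.
  induction b; simpl; intros H; auto.
  - split; [apply IHb1|apply IHb2]; intro; apply H; apply in_or_app; auto.
  - split; [apply IHb1|apply IHb2]; intro; apply H; apply in_or_app; auto.
  - destruct (Nat.eqb_spec x y); auto.
    assert (~ In y (fv b)).
    { intro Hy; apply H; apply filter_In; split; auto.
      destruct (Nat.eqb_spec y x); [congruence|reflexivity]. }
    split; auto.
Qed.

Lemma free_sub_fsub phi chi y :
  In y (fv chi) -> free_for phi y chi -> fsub phi (subst chi y phi).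
Proof.
  induction chi; simpl; intros Hin Hff; try contradiction.
  - destruct Hin as [<-|[]]. rewrite Nat.eqb_refl. constructor.
  - destruct Hff. apply in_app_or in Hin as [|]; [apply fs_andl|apply fs_andr]; auto.
  - destruct Hff. apply in_app_or in Hin as [|]; [apply fs_orl|apply fs_orr]; auto.
  - constructor; auto.
  - constructor; auto.
  - apply filter_In in Hin as [Hin Hne].
    destruct (Nat.eqb_spec y x); [discriminate|].
    destruct (Nat.eqb_spec x y); [congruence|].
    destruct Hff as [[H|H] Hff]; [contradiction|].
    constructor; auto.
Qed.

Fixpoint allv (f : form) : list nat :=
  match f with
  | FVar x => [x]
  | FAnd a b | FOr a b => allv a ++ allv b
  | FDia a | FBox a => allv a
  | FFix _ x a => x :: allv a
  | _ => []
  end.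

Lemma fv_allv f y : In y (fv f) -> In y (allv f).
Proof.
  induction f; simpl; intros H; auto; try contradiction.
  - apply in_app_or in H as [|]; apply in_or_app; auto.
  - apply in_app_or in H as [|]; apply in_or_app; auto.
  - apply filter_In in H as [H _]; auto.
Qed.

Lemma fsub_free_sub_y phi psi : fsub phi psi -> forall y, ~ In y (allv psi) ->
  exists chi, In y (fv chi) /\ free_for phi y chi /\ psi = subst chi y phi.
Proof.
  induction 1; intros y Hy.
  - exists (FVar y); simpl; rewrite Nat.eqb_refl; auto.
  - destruct (IHfsub y) as [chi [H1 [H2 H3]]].
    { intro; apply Hy; simpl; apply in_or_app; auto. }
    exists (FAnd chi b); simpl; split; [apply in_or_app; auto|split].
    + split; auto. apply free_for_notfree; intro; apply Hy; simpl; apply in_or_app; right; apply fv_allv; auto.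
    + rewrite (subst_notfree b); [congruence|]. intro; apply Hy; simpl; apply in_or_app; right; apply fv_allv; auto.
  - destruct (IHfsub y) as [chi [H1 [H2 H3]]].
    { intro; apply Hy; simpl; apply in_or_app; auto. }
    exists (FAnd a chi); simpl; split; [apply in_or_app; auto|split].
    + split; auto. apply free_for_notfree; intro; apply Hy; simpl; apply in_or_app; left; apply fv_allv; auto.
    + rewrite (subst_notfree a); [congruence|]. intro; apply Hy; simpl; apply in_or_app; left; apply fv_allv; auto.
  - destruct (IHfsub y) as [chi [H1 [H2 H3]]].
    { intro; apply Hy; simpl; apply in_or_app; auto. }
    exists (FOr chi b); simpl; split; [apply in_or_app; auto|split].
    + split; auto. apply free_for_notfree; intro; apply Hy; simpl; apply in_or_app; right; apply fv_allv; auto.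
    + rewrite (subst_notfree b); [congruence|]. intro; apply Hy; simpl; apply in_or_app; right; apply fv_allv; auto.
  - destruct (IHfsub y) as [chi [H1 [H2 H3]]].
    { intro; apply Hy; simpl; apply in_or_app; auto. }
    exists (FOr a chi); simpl; split; [apply in_or_app; auto|split].
    + split; auto. apply free_for_notfree; intro; apply Hy; simpl; apply in_or_app; left; apply fv_allv; auto.
    + rewrite (subst_notfree a); [congruence|]. intro; apply Hy; simpl; apply in_or_app; left; apply fv_allv; auto.
  - destruct (IHfsub y) as [chi [H1 [H2 H3]]]; auto.
    exists (FDia chi); simpl; split; auto; split; auto; congruence.
  - destruct (IHfsub y) as [chi [H1 [H2 H3]]]; auto.
    exists (FBox chi); simpl; split; auto; split; auto; congruence.
  - destruct (IHfsub y) as [chi [H1 [H2 H3]]].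
    { intro; apply Hy; simpl; auto. }
    assert (x <> y) by (intro; subst; apply Hy; simpl; auto).
    exists (FFix e x chi); simpl.
    destruct (Nat.eqb_spec x y); [congruence|].
    split; [apply filter_In; split; auto; destruct (Nat.eqb_spec y x); [congruence|reflexivity]|].
    split; [split; auto|congruence].
Qed.

Lemma le_list_max x l : In x l -> x <= list_max l.
Proof.
  induction l; simpl; [contradiction|]. intros [<-|H]; [lia|]. specialize (IHl H); lia.
Qed.

Lemma fsub_free_sub phi psi : fsub phi psi -> free_sub phi psi.
Proof.
  intros H. set (y := S (list_max (allv psi))).
  destruct (fsub_free_sub_y phi psi H y) as [chi [H1 [H2 H3]]].
  { intro Hin. apply le_list_max in Hin. unfold y in Hin; lia. }
  exists chi, y; auto.
Qed.

Lemma free_sub_to_fsub phi psi : free_sub phi psi -> fsub phi psi.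
Proof. intros [chi [y [H1 [H2 ->]]]]. apply free_sub_fsub; auto. Qed.

Definition bvdisj (a F : form) := forall y, In y (bv a) -> ~ In y (fv F).

Lemma subst_self_fsub a x F : bvdisj a F -> In x (fv a) -> fsub F (subst a x F).
Proof.
  unfold bvdisj. induction a; simpl; intros Hd Hin; try contradiction.
  - destruct Hin as [<-|[]]. rewrite Nat.eqb_refl. constructor.
  - apply in_app_or in Hin as [|]; [apply fs_andl|apply fs_andr];
      [apply IHa1|apply IHa2]; auto; intros; apply Hd; apply in_or_app; auto.
  - apply in_app_or in Hin as [|]; [apply fs_orl|apply fs_orr];
      [apply IHa1|apply IHa2]; auto; intros; apply Hd; apply in_or_app; auto.
  - constructor; auto.
  - constructor; auto.
  - apply filter_In in Hin as [Hin Hne].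
    match type of Hne with context [Nat.eqb ?u ?v] => destruct (Nat.eqb_spec u v) as [Heq|Hneq]; [discriminate|] end.
    match goal with |- context [Nat.eqb ?u ?v] => destruct (Nat.eqb_spec u v); [congruence|] end.
    constructor; auto.
Qed.

Lemma Lrefl rho a x F : bvdisj a F -> rho = subst a x F ->
  fsub rho F \/ (fsub rho a /\ ~ In x (fv rho)) \/ fsub F rho.
Proof.
  intros Hd ->. destruct (in_dec Nat.eq_dec x (fv a)).
  - right; right; apply subst_self_fsub; auto.
  - rewrite subst_notfree; auto. right; left; split; auto; constructor.
Qed.

Lemma keyL a x F rho : bvdisj a F -> fsub rho (subst a x F) ->
  fsub rho F \/ (fsub rho a /\ ~ In x (fv rho)) \/ fsub F rho.
Proof.
  revert rho. induction a; intros rho Hd H;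
    try (eapply Lrefl; [eauto|]; inversion H; auto; fail).
  - simpl in H. destruct (Nat.eqb_spec x0 x).
    + left; subst; auto.
    + inversion H; subst. right; left; split; [constructor|simpl; intuition].
  - simpl in H; inversion H; subst.
    + eapply Lrefl with (a := FAnd a1 a2); eauto.
    + destruct (IHa1 rho) as [|[[]|]]; auto.
      { intros y Hy; apply Hd; simpl; apply in_or_app; auto. }
      right; left; split; auto; constructor; auto.
    + destruct (IHa2 rho) as [|[[]|]]; auto.
      { intros y Hy; apply Hd; simpl; apply in_or_app; auto. }
      right; left; split; auto; apply fs_andr; auto.
  - simpl in H; inversion H; subst.
    + eapply Lrefl with (a := FOr a1 a2); eauto.
    + destruct (IHa1 rho) as [|[[]|]]; auto.
      { intros y Hy; apply Hd; simpl; apply in_or_app; auto. }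
      right; left; split; auto; constructor; auto.
    + destruct (IHa2 rho) as [|[[]|]]; auto.
      { intros y Hy; apply Hd; simpl; apply in_or_app; auto. }
      right; left; split; auto; apply fs_orr; auto.
  - simpl in H; inversion H; subst.
    + eapply Lrefl with (a := FDia a); eauto.
    + destruct (IHa rho) as [|[[]|]]; auto.
      right; left; split; auto; constructor; auto.
  - simpl in H; inversion H; subst.
    + eapply Lrefl with (a := FBox a); eauto.
    + destruct (IHa rho) as [|[[]|]]; auto.
      right; left; split; auto; constructor; auto.
  - assert (Hd' : bvdisj a F) by (intros y Hy; apply Hd; simpl; auto).
    simpl in H. destruct (Nat.eqb_spec x0 x).
    + subst x0. inversion H; subst.
      * right; left; split; [constructor|simpl].
        intro Hx; apply filter_In in Hx as [_ Hx]; rewrite Nat.eqb_refl in Hx; discriminate.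
      * right; left; split; try (constructor; auto; fail); auto.
    + inversion H; subst.
      * eapply Lrefl with (a := FFix e x0 a); eauto. simpl.
        destruct (Nat.eqb_spec x0 x); congruence.
      * destruct (IHa rho) as [|[[]|]]; auto.
        right; left; split; auto; constructor; auto.
Qed.

Lemma exist_cand (rho : nat -> form) : forall n, 1 <= n ->
  (forall i, 1 <= i < n -> step (rho (S i)) (rho i)) ->
  (forall i, 1 <= i <= n -> tidy (rho i)) ->
  exists j, 1 <= j <= n /\ (forall i, 1 <= i <= n -> fsub (rho j) (rho i)) /\
    (is_fixpoint (rho 1) -> is_fixpoint (rho j)).
Proof.
  induction n as [|m IH]; intros Hn Hst Hti; [lia|].
  destruct (Nat.eq_dec m 0) as [->|Hm].
  { exists 1; split; [lia|split; auto]. intros i Hi; replace i with 1 by lia; constructor. }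
  destruct IH as [j [Hj [Hall Hfix]]]; [lia| intros; apply Hst; lia | intros; apply Hti; lia |].
  assert (Hs : step (rho (S m)) (rho m)) by (apply Hst; lia).
  assert (HT : tidy (rho (S m))) by (apply Hti; lia).
  assert (Hjm : fsub (rho j) (rho m)) by (apply Hall; lia).
  assert (keep : fsub (rho j) (rho (S m)) -> exists j0, 1 <= j0 <= S m /\
     (forall i, 1 <= i <= S m -> fsub (rho j0) (rho i)) /\
     (is_fixpoint (rho 1) -> is_fixpoint (rho j0))).
  { intros Hk; exists j; split; [lia|split; auto].
    intros i Hi. destruct (Nat.eq_dec i (S m)) as [->|]; auto. apply Hall; lia. }
  remember (rho (S m)) as A eqn:EA; remember (rho m) as B eqn:EB.
  destruct Hs; try (apply keep; constructor; auto; fail).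
  all: try (apply keep; first [apply fs_andr|apply fs_orr]; auto; fail).
  - assert (Hd : bvdisj a (FFix e x a)).
    { intros y Hy Hf. unfold tidy in HT. try rewrite <- EA in HT. apply (HT y Hf); simpl; auto. }
    destruct (keyL a x (FFix e x a) (rho j) Hd Hjm) as [H|[[H1 H2]|H]].
    + apply keep; auto.
    + apply keep; constructor; auto.
    + exists (S m); split; [lia|split].
      * intros i Hi. destruct (Nat.eq_dec i (S m)) as [->|]; [constructor|].
        rewrite <- EA. eapply fsub_trans; eauto. apply Hall; lia.
      * intros _. rewrite <- EA. exists e, x, a; reflexivity.
Qed.

Theorem mainTheorem2 (n : nat) (rho : nat -> form) :
  1 <= n ->
  (forall i, 1 <= i < n -> step (rho (S i)) (rho i)) ->
  (forall i, 1 <= i <= n -> tidy (rho i)) ->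
  (exists! r, (exists j, 1 <= j <= n /\ r = rho j) /\
              (forall i, 1 <= i <= n -> free_sub r (rho i))) /\
  (forall r, (exists j, 1 <= j <= n /\ r = rho j) ->
             (forall i, 1 <= i <= n -> free_sub r (rho i)) ->
             is_fixpoint (rho 1) -> is_fixpoint r).
Proof.
  intros Hn Hst Hti.
  destruct (exist_cand rho n Hn Hst Hti) as [j [Hj [Hall Hfix]]].
  split.
  - exists (rho j). split.
    + split; [exists j; auto|]. intros i Hi; apply fsub_free_sub; auto.
    + intros r' [[j' [Hj' ->]] Hr]. apply fsub_antisym; auto.
      apply free_sub_to_fsub; auto.
  - intros r [j' [Hj' ->]] Hr Hf.
    assert (E : rho j = rho j').
    { apply fsub_antisym; auto. apply free_sub_to_fsub; auto. }
    rewrite <- E; auto.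
Qed.
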